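(* Let $f\in C^4(\mathbb I)$ on an open interval $\mathbb I$ with $f''>0$ and $f''''>0$ on $\mathbb I$. Let $\rho^{n-1},\rho^n,\phi^n\in\mathcal C$ and let $(\rho^{n+1},\phi^{n+1})\in\mathcal C^2$ solve the scheme, with $\rho^n,\rho^{n+1}$ and $\hat\rho^{n+\frac12}$ taking values in $\mathbb I$. Set $F^k_h:=F_h(\rho^k,\phi^k)$ and $v^{n+\frac12}=\gamma S^{n+\frac12}-\frac\chi2(\phi^{n+1}+\phi^n)+\frac{\chi^2\Delta t}{4\theta}(\rho^{n+1}-\rho^n)$. Then $$F_h^{n+1}-F_h^n\le-\Delta t\Big[\frac{1}{f''(\hat\rho^{n+\frac12})}\nabla_hv^{n+\frac12},\nabla_hv^{n+\frac12}\Big]-\frac{\theta}{\Delta t}\|\phi^{n+1}-\phi^n\|_2^2-\frac{\chi^2\Delta t}{4\theta}\|\rho^{n+1}-\rho^n\|_2^2\le 0 .$$ (This applies in particular to $f(\rho)=\rho(\ln\rho-1)$ and $f(\rho)=\rho(\ln\rho-1)+\kappa\rho^2/2$ on $(0,\infty)$, and to $f(\rho)=\rho\ln\rho+(M-\rho)\ln(1-\rho/M)$ on $(0,M)$.)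
   Context: Grid setting: $\Omega=(a,b)^3$, $N\in\mathbb N$, $h=(b-a)/N$, cell centers $(x_i,y_j,z_k)=(a+(i-\tfrac12)h,a+(j-\tfrac12)h,a+(k-\tfrac12)h)$, $1\le i,j,k\le N$. $\mathcal C$ is the space of cell-centered grid functions $u_{i,j,k}$, extended to ghost points by the discrete homogeneous Neumann condition $u_{0,j,k}=u_{1,j,k}$, $u_{N+1,j,k}=u_{N,j,k}$ (and likewise in $j$ and $k$). Operators: $D_xf_{i+1/2,j,k}=(f_{i+1,j,k}-f_{i,j,k})/h$, $A_xf_{i+1/2,j,k}=(f_{i+1,j,k}+f_{i,j,k})/2$; for face-centered $g$, $d_xg_{i,j,k}=(g_{i+1/2,j,k}-g_{i-1/2,j,k})/h$, $a_xg_{i,j,k}=(g_{i+1/2,j,k}+g_{i-1/2,j,k})/2$; analogously in $y,z$. $\nabla_hf=(D_xf,D_yf,D_zf)$, $\Delta_hf=d_xD_xf+d_yD_yf+d_zD_zf$, and for cell-centered $\mathcal D$, $\nabla_h\cdot(\mathcal D\nabla_hf):=d_x(A_x\mathcal D\,D_xf)+d_y(A_y\mathcal D\,D_yf)+d_z(A_z\mathcal D\,D_zf)$. Inner products: $\langle f,g\rangle=h^3\sum_{i,j,k=1}^Nf_{i,j,k}g_{i,j,k}$, $\|f\|_2^2=\langle f,f\rangle$; for face-centered vector fields $[\vec f,\vec g]=\langle a_x(f^xg^x),1\rangle+\langle a_y(f^yg^y),1\rangle+\langle a_z(f^zg^z),1\rangle$, $\|\nabla_hf\|_2^2=[\nabla_hf,\nabla_hf]$,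 and for cell-centered $\mathcal D$, $[\mathcal D\nabla_hf,\nabla_hg]:=[(A_x\mathcal D\,D_xf,A_y\mathcal D\,D_yf,A_z\mathcal D\,D_zf),\nabla_hg]$. Scheme: parameters $\gamma,\mu,\alpha,\chi,\theta>0$, $\Delta t>0$. With $\hat\rho^{n+\frac12}=\big((\tfrac32\rho^n-\tfrac12\rho^{n-1})^2+\Delta t^8\big)^{1/2}$ pointwise, $(\rho^{n+1},\phi^{n+1})$ satisfies $$\frac{\rho^{n+1}-\rho^n}{\Delta t}=\nabla_h\cdot\Big[\frac{1}{f''(\hat\rho^{n+\frac12})}\nabla_hv^{n+\frac12}\Big],\qquad \theta\frac{\phi^{n+1}-\phi^n}{\Delta t}=\frac\mu2\Delta_h(\phi^{n+1}+\phi^n)-\frac\alpha2(\phi^{n+1}+\phi^n)+\frac\chi2(\rho^{n+1}+\rho^n),$$ with $v^{n+\frac12}$ as in the claim and $S^{n+\frac12}=f'(\rho^{n+1})-\tfrac12f''(\rho^{n+1})(\rho^{n+1}-\rho^n)+\tfrac16f'''(\rho^{n+1})(\rho^{n+1}-\rho^n)^2$ pointwise. Discrete energy: $F_h(\rho,\phi)=\gamma\langle f(\rho),1\rangle-\chi\langle\rho,\phi\rangle+\frac\mu2\|\nabla_h\phi\|_2^2+\frac\alpha2\|\phi\|_2^2$. *)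

(* Defs.v *)
From Stdlib Require Import Reals Lra Lia.
From Coquelicot Require Import Rbar.
Open Scope R_scope.

(* Cell-centered grid functions, indexed by (i,j,k); only 1 <= i,j,k <= N matter. *)
Definition grid := nat -> nat -> nat -> R.

(* clamp index into {1..N}: realizes the homogeneous Neumann ghost extension
   u_0 = u_1, u_{N+1} = u_N (and is the identity on 1..N). *)
Definition clamp (N i : nat) : nat := Nat.max 1 (Nat.min i N).
Definition ext (N : nat) (u : grid) : grid :=
  fun i j k => u (clamp N i) (clamp N j) (clamp N k).

(* Face-centered functions: in direction x, index i stands for the face i+1/2
   (i = 0..N); similarly for y, z. *)
Definition Dx (N : nat) (h : R) (u : grid) : grid :=
  fun i j k => (ext N u (S i) j k - ext N u i j k) / h.
Definition Dy (N : nat) (h : R) (u : grid) : grid :=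
  fun i j k => (ext N u i (S j) k - ext N u i j k) / h.
Definition Dz (N : nat) (h : R) (u : grid) : grid :=
  fun i j k => (ext N u i j (S k) - ext N u i j k) / h.
Definition Ax (N : nat) (u : grid) : grid :=
  fun i j k => (ext N u (S i) j k + ext N u i j k) / 2.
Definition Ay (N : nat) (u : grid) : grid :=
  fun i j k => (ext N u i (S j) k + ext N u i j k) / 2.
Definition Az (N : nat) (u : grid) : grid :=
  fun i j k => (ext N u i j (S k) + ext N u i j k) / 2.

(* face -> cell operators (cell i has faces i-1/2 = index i-1 and i+1/2 = index i) *)
Definition dx (h : R) (g : grid) : grid :=
  fun i j k => (g i j k - g (i - 1)%nat j k) / h.
Definition dy (h : R) (g : grid) : grid :=
  fun i j k => (g i j k - g i (j - 1)%nat k) / h.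
Definition dz (h : R) (g : grid) : grid :=
  fun i j k => (g i j k - g i j (k - 1)%nat) / h.
Definition ax (g : grid) : grid :=
  fun i j k => (g i j k + g (i - 1)%nat j k) / 2.
Definition ay (g : grid) : grid :=
  fun i j k => (g i j k + g i (j - 1)%nat k) / 2.
Definition az (g : grid) : grid :=
  fun i j k => (g i j k + g i j (k - 1)%nat) / 2.

Definition Lap (N : nat) (h : R) (u : grid) : grid :=
  fun i j k => dx h (Dx N h u) i j k + dy h (Dy N h u) i j k + dz h (Dz N h u) i j k.

Definition divDgrad (N : nat) (h : R) (D u : grid) : grid :=
  fun i j k =>
    dx h (fun a b c => Ax N D a b c * Dx N h u a b c) i j k
  + dy h (fun a b c => Ay N D a b c * Dy N h u a b c) i j k
  + dz h (fun a b c => Az N D a b c * Dz N h u a b c) i j k.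

Fixpoint sumR (n : nat) (F : nat -> R) : R :=
  match n with O => 0 | S m => sumR m F + F m end.

Definition sum3 (N : nat) (F : grid) : R :=
  sumR N (fun i => sumR N (fun j => sumR N (fun k => F (S i) (S j) (S k)))).

Definition ip (N : nat) (h : R) (f g : grid) : R :=
  h ^ 3 * sum3 N (fun i j k => f i j k * g i j k).
Definition one : grid := fun _ _ _ => 1.
Definition norm2sq (N : nat) (h : R) (f : grid) : R := ip N h f f.

Definition face_ip (N : nat) (h : R) (fx fy fz gx gy gz : grid) : R :=
  ip N h (ax (fun i j k => fx i j k * gx i j k)) one
+ ip N h (ay (fun i j k => fy i j k * gy i j k)) one
+ ip N h (az (fun i j k => fz i j k * gz i j k)) one.

Definition gradnorm2 (N : nat) (h : R) (f : grid) : R :=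
  face_ip N h (Dx N h f) (Dy N h f) (Dz N h f) (Dx N h f) (Dy N h f) (Dz N h f).

Definition wgrad_ip (N : nat) (h : R) (D f g : grid) : R :=
  face_ip N h
    (fun i j k => Ax N D i j k * Dx N h f i j k)
    (fun i j k => Ay N D i j k * Dy N h f i j k)
    (fun i j k => Az N D i j k * Dz N h f i j k)
    (Dx N h g) (Dy N h g) (Dz N h g).

Definition Fh (N : nat) (h gamma chi mu alpha : R) (f : R -> R) (rho phi : grid) : R :=
  gamma * ip N h (fun i j k => f (rho i j k)) one - chi * ip N h rho phi
  + mu / 2 * gradnorm2 N h phi + alpha / 2 * norm2sq N h phi.

Definition rhohat (dt : R) (rho_nm1 rho_n : grid) : grid :=
  fun i j k => sqrt ((3 / 2 * rho_n i j k - 1 / 2 * rho_nm1 i j k) ^ 2 + dt ^ 8).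

(* S^{n+1/2} with f1 = f', f2 = f'', f3 = f''' *)
Definition Shalf (f1 f2 f3 : R -> R) (rho_n rho_np1 : grid) : grid :=
  fun i j k =>
    let r1 := rho_np1 i j k in let d := r1 - rho_n i j k in
    f1 r1 - 1 / 2 * f2 r1 * d + 1 / 6 * f3 r1 * d ^ 2.

Definition vhalf (gamma chi theta dt : R) (f1 f2 f3 : R -> R)
  (rho_n rho_np1 phi_n phi_np1 : grid) : grid :=
  fun i j k =>
    gamma * Shalf f1 f2 f3 rho_n rho_np1 i j k
    - chi / 2 * (phi_np1 i j k + phi_n i j k)
    + chi ^ 2 * dt / (4 * theta) * (rho_np1 i j k - rho_n i j k).

Definition inI (lo hi : Rbar) (x : R) : Prop := Rbar_lt lo x /\ Rbar_lt x hi.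

Definition in_cells (N i j k : nat) : Prop :=
  (1 <= i <= N)%nat /\ (1 <= j <= N)%nat /\ (1 <= k <= N)%nat.

(* Main.v *)
From Coquelicot Require Import Coquelicot.
From Stdlib Require Import Reals Lra Lia.
From Coquelicot Require Import Rbar.
Require Import Defs.
Open Scope R_scope.

Lemma sumR_ext_lt n F G : (forall i, (i < n)%nat -> F i = G i) -> sumR n F = sumR n G.
Proof. induction n; simpl; intros H; auto. rewrite IHn by (intros; apply H; lia). rewrite H by lia. auto. Qed.
Lemma sumR_plus n F G : sumR n (fun i => F i + G i) = sumR n F + sumR n G.
Proof. induction n; simpl; [ring|rewrite IHn; ring]. Qed.
Lemma sumR_minus n F G : sumR n (fun i => F i - G i) = sumR n F - sumR n G.
Proof. induction n; simpl; [ring|rewrite IHn; ring]. Qed.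
Lemma sumR_scal n c F : sumR n (fun i => c * F i) = c * sumR n F.
Proof. induction n; simpl; [ring|rewrite IHn; ring]. Qed.
Lemma sumR_tele n H : sumR n (fun i => H (S i) - H i) = H n - H 0%nat.
Proof. induction n; simpl; [ring|rewrite IHn; ring]. Qed.
Lemma sumR_zero n F : (forall i, (i < n)%nat -> F i = 0) -> sumR n F = 0.
Proof. intros H. rewrite (sumR_ext_lt n F (fun _ => 0)) by auto. clear H. induction n; simpl; [ring|rewrite IHn; ring]. Qed.
Lemma sumR_le n F G : (forall i, (i < n)%nat -> F i <= G i) -> sumR n F <= sumR n G.
Proof. induction n; simpl; intros H; [lra|]. apply Rplus_le_compat; [apply IHn; intros; apply H; lia| apply H; lia]. Qed.

Lemma sum3_ext N F G : (forall i j k, (i < N)%nat -> (j < N)%nat -> (k < N)%nat ->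
  F (S i) (S j) (S k) = G (S i) (S j) (S k)) -> sum3 N F = sum3 N G.
Proof. intros H; unfold sum3. apply sumR_ext_lt; intros. apply sumR_ext_lt; intros.
apply sumR_ext_lt; intros. auto. Qed.
Lemma sum3_le N F G : (forall i j k, (i < N)%nat -> (j < N)%nat -> (k < N)%nat ->
  F (S i) (S j) (S k) <= G (S i) (S j) (S k)) -> sum3 N F <= sum3 N G.
Proof. intros H; unfold sum3. apply sumR_le; intros. apply sumR_le; intros.
apply sumR_le; intros. auto. Qed.
Lemma sum3_plus N F G : sum3 N (fun i j k => F i j k + G i j k) = sum3 N F + sum3 N G.
Proof. unfold sum3. rewrite <- sumR_plus. apply sumR_ext_lt; intros.
rewrite <- sumR_plus. apply sumR_ext_lt; intros. rewrite <- sumR_plus. auto. Qed.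
Lemma sum3_minus N F G : sum3 N (fun i j k => F i j k - G i j k) = sum3 N F - sum3 N G.
Proof. unfold sum3. rewrite <- sumR_minus. apply sumR_ext_lt; intros.
rewrite <- sumR_minus. apply sumR_ext_lt; intros. rewrite <- sumR_minus. auto. Qed.
Lemma sum3_scal N c F : sum3 N (fun i j k => c * F i j k) = c * sum3 N F.
Proof. unfold sum3. rewrite <- sumR_scal. apply sumR_ext_lt; intros.
rewrite <- sumR_scal. apply sumR_ext_lt; intros. rewrite <- sumR_scal. auto. Qed.
Lemma sum3_nonneg N F : (forall i j k, (i < N)%nat -> (j < N)%nat -> (k < N)%nat ->
  0 <= F (S i) (S j) (S k)) -> 0 <= sum3 N F.
Proof. intros H. replace 0 with (sum3 N (fun _ _ _ => 0)).
apply sum3_le; auto. unfold sum3. apply sumR_zero; intros. apply sumR_zero; intros.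
apply sumR_zero; intros. auto. Qed.

Lemma tele3_x N Phi H :
  (forall i j k, (i < N)%nat -> (j < N)%nat -> (k < N)%nat ->
    Phi (S i) (S j) (S k) = H (S i) (S j) (S k) - H i (S j) (S k)) ->
  (forall j k, H 0%nat j k = 0) -> (forall j k, H N j k = 0) -> sum3 N Phi = 0.
Proof. intros E H0 HN. unfold sum3.
pose (K := fun a => sumR N (fun j => sumR N (fun k => H a (S j) (S k)))).
transitivity (sumR N (fun i => K (S i) - K i)).
- apply sumR_ext_lt. intros i Hi. unfold K. rewrite <- sumR_minus. apply sumR_ext_lt; intros.
  rewrite <- sumR_minus. apply sumR_ext_lt; intros. auto.
- rewrite sumR_tele. unfold K. rewrite !sumR_zero; auto; intros; try ring; apply sumR_zero; intros; auto.
Qed.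
Lemma tele3_y N Phi H :
  (forall i j k, (i < N)%nat -> (j < N)%nat -> (k < N)%nat ->
    Phi (S i) (S j) (S k) = H (S i) (S j) (S k) - H (S i) j (S k)) ->
  (forall i k, H i 0%nat k = 0) -> (forall i k, H i N k = 0) -> sum3 N Phi = 0.
Proof. intros E H0 HN. unfold sum3. apply sumR_zero; intros i Hi.
pose (K := fun a => sumR N (fun k => H (S i) a (S k))).
transitivity (sumR N (fun j => K (S j) - K j)).
- apply sumR_ext_lt. intros j Hj. unfold K. rewrite <- sumR_minus. apply sumR_ext_lt; intros. auto.
- rewrite sumR_tele. unfold K. rewrite !sumR_zero; auto; intros; try ring.
Qed.
Lemma tele3_z N Phi H :
  (forall i j k, (i < N)%nat -> (j < N)%nat -> (k < N)%nat ->
    Phi (S i) (S j) (S k) = H (S i) (S j) (S k) - H (S i) (S j) k) ->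
  (forall i j, H i j 0%nat = 0) -> (forall i j, H i j N = 0) -> sum3 N Phi = 0.
Proof. intros E H0 HN. unfold sum3. apply sumR_zero; intros i Hi. apply sumR_zero; intros j Hj.
transitivity (sumR N (fun k => H (S i) (S j) (S k) - H (S i) (S j) k)).
- apply sumR_ext_lt. intros k Hk. auto.
- rewrite (sumR_tele N (fun k => H (S i) (S j) k)). rewrite H0, HN; ring.
Qed.
Lemma clamp_id N i : (1 <= i <= N)%nat -> clamp N i = i.
Proof. unfold clamp; lia. Qed.
Lemma clamp_rng N i : (1 <= N)%nat -> (1 <= clamp N i <= N)%nat.
Proof. unfold clamp; lia. Qed.
Lemma ext_in N (g : grid) i j k : (i < N)%nat -> (j < N)%nat -> (k < N)%nat ->
  ext N g (S i) (S j) (S k) = g (S i) (S j) (S k).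
Proof. intros; unfold ext; rewrite !clamp_id by lia; auto. Qed.

Lemma Dx_0 N h u j k : (1 <= N)%nat -> Dx N h u 0%nat j k = 0.
Proof. intros; unfold Dx, ext. rewrite (clamp_id N 1) by lia.
replace (clamp N 0) with 1%nat by (unfold clamp; lia). unfold Rdiv; ring. Qed.
Lemma Dx_N N h u j k : (1 <= N)%nat -> Dx N h u N j k = 0.
Proof. intros; unfold Dx, ext. rewrite (clamp_id N N) by lia.
replace (clamp N (S N)) with N by (unfold clamp; lia). unfold Rdiv; ring. Qed.
Lemma Dy_0 N h u i k : (1 <= N)%nat -> Dy N h u i 0%nat k = 0.
Proof. intros; unfold Dy, ext. rewrite (clamp_id N 1) by lia.
replace (clamp N 0) with 1%nat by (unfold clamp; lia). unfold Rdiv; ring. Qed.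
Lemma Dy_N N h u i k : (1 <= N)%nat -> Dy N h u i N k = 0.
Proof. intros; unfold Dy, ext. rewrite (clamp_id N N) by lia.
replace (clamp N (S N)) with N by (unfold clamp; lia). unfold Rdiv; ring. Qed.
Lemma Dz_0 N h u i j : (1 <= N)%nat -> Dz N h u i j 0%nat = 0.
Proof. intros; unfold Dz, ext. rewrite (clamp_id N 1) by lia.
replace (clamp N 0) with 1%nat by (unfold clamp; lia). unfold Rdiv; ring. Qed.
Lemma Dz_N N h u i j : (1 <= N)%nat -> Dz N h u i j N = 0.
Proof. intros; unfold Dz, ext. rewrite (clamp_id N N) by lia.
replace (clamp N (S N)) with N by (unfold clamp; lia). unfold Rdiv; ring. Qed.

Lemma sbp_x N h (F g : grid) : (1 <= N)%nat -> h <> 0 ->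
  (forall j k, F 0%nat j k = 0) -> (forall j k, F N j k = 0) ->
  sum3 N (fun a b c => g a b c * dx h F a b c + ax (fun a b c => F a b c * Dx N h g a b c) a b c * one a b c) = 0.
Proof. intros HN Hh H0 H1.
apply tele3_x with (H := fun a b c => F a b c * (ext N g a b c + ext N g (S a) b c) / (2*h)).
- intros i j k Hi Hj Hk. unfold dx, ax, Dx, one. replace (S i - 1)%nat with i by lia.
  rewrite (ext_in N g i j k) by auto. field. auto.
- intros; rewrite H0; unfold Rdiv; ring.
- intros; rewrite H1; unfold Rdiv; ring.
Qed.
Lemma sbp_y N h (F g : grid) : (1 <= N)%nat -> h <> 0 ->
  (forall i k, F i 0%nat k = 0) -> (forall i k, F i N k = 0) ->
  sum3 N (fun a b c => g a b c * dy h F a b c + ay (fun a b c => F a b c * Dy N h g a b c) a b c * one a b c) = 0.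
Proof. intros HN Hh H0 H1.
apply tele3_y with (H := fun a b c => F a b c * (ext N g a b c + ext N g a (S b) c) / (2*h)).
- intros i j k Hi Hj Hk. unfold dy, ay, Dy, one. replace (S j - 1)%nat with j by lia.
  rewrite (ext_in N g i j k) by auto. field. auto.
- intros; rewrite H0; unfold Rdiv; ring.
- intros; rewrite H1; unfold Rdiv; ring.
Qed.
Lemma sbp_z N h (F g : grid) : (1 <= N)%nat -> h <> 0 ->
  (forall i j, F i j 0%nat = 0) -> (forall i j, F i j N = 0) ->
  sum3 N (fun a b c => g a b c * dz h F a b c + az (fun a b c => F a b c * Dz N h g a b c) a b c * one a b c) = 0.
Proof. intros HN Hh H0 H1.
apply tele3_z with (H := fun a b c => F a b c * (ext N g a b c + ext N g a b (S c)) / (2*h)).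
- intros i j k Hi Hj Hk. unfold dz, az, Dz, one. replace (S k - 1)%nat with k by lia.
  rewrite (ext_in N g i j k) by auto. field. auto.
- intros; rewrite H0; unfold Rdiv; ring.
- intros; rewrite H1; unfold Rdiv; ring.
Qed.

Lemma sbp N h Dm u g : (1 <= N)%nat -> h <> 0 ->
  ip N h g (divDgrad N h Dm u) = - wgrad_ip N h Dm u g.
Proof. intros HN Hh.
assert (Ex := sbp_x N h (fun a b c => Ax N Dm a b c * Dx N h u a b c) g HN Hh
   (fun j k => ltac:(cbv beta; rewrite Dx_0 by auto; ring)) (fun j k => ltac:(cbv beta; rewrite Dx_N by auto; ring))).
assert (Ey := sbp_y N h (fun a b c => Ay N Dm a b c * Dy N h u a b c) g HN Hh
   (fun j k => ltac:(cbv beta; rewrite Dy_0 by auto; ring)) (fun j k => ltac:(cbv beta; rewrite Dy_N by auto; ring))).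
assert (Ez := sbp_z N h (fun a b c => Az N Dm a b c * Dz N h u a b c) g HN Hh
   (fun j k => ltac:(cbv beta; rewrite Dz_0 by auto; ring)) (fun j k => ltac:(cbv beta; rewrite Dz_N by auto; ring))).
rewrite sum3_plus in Ex, Ey, Ez.
unfold ip, wgrad_ip, face_ip, ip.
assert (E : sum3 N (fun i j k => g i j k * divDgrad N h Dm u i j k) =
  sum3 N (fun a b c => g a b c * dx h (fun a b c => Ax N Dm a b c * Dx N h u a b c) a b c)
+ sum3 N (fun a b c => g a b c * dy h (fun a b c => Ay N Dm a b c * Dy N h u a b c) a b c)
+ sum3 N (fun a b c => g a b c * dz h (fun a b c => Az N Dm a b c * Dz N h u a b c) a b c)).
{ rewrite <- !sum3_plus. apply sum3_ext; intros. unfold divDgrad. ring. }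
rewrite E. cbv beta in *. nra.
Qed.
Lemma dpoly : forall (F F' : R -> R) x A B C E r, derivable_pt_lim F x (F' x) ->
 derivable_pt_lim (fun t => F t - (A + B*(t-r) + C*(t-r)^2 + E*(t-r)^3)) x
   (F' x - (B + 2*C*(x-r) + 3*E*(x-r)^2)).
Proof.
intros. apply derivable_pt_lim_minus; auto.
apply is_derive_Reals. auto_derive. auto. ring. Qed.

Lemma conv_I lo hi x y c : inI lo hi x -> inI lo hi y -> x <= c <= y -> inI lo hi c.
Proof. unfold inI; destruct lo, hi; simpl; intuition lra. Qed.

Lemma mono_inc (g g' : R -> R) x y : x <= y ->
  (forall c, x <= c <= y -> derivable_pt_lim g c (g' c)) ->
  (forall c, x <= c <= y -> 0 <= g' c) -> g x <= g y.
Proof. intros Hxy Hd Hp. destruct (Req_dec x y) as [->|Hne]; [lra|].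
destruct (MVT_cor2 g g' x y) as [c [E Hc]]; [lra|auto|].
assert (0 <= g' c) by (apply Hp; lra). nra. Qed.

Lemma mono_dec (g g' : R -> R) x y : x <= y ->
  (forall c, x <= c <= y -> derivable_pt_lim g c (g' c)) ->
  (forall c, x <= c <= y -> g' c <= 0) -> g y <= g x.
Proof. intros Hxy Hd Hp. destruct (Req_dec x y) as [->|Hne]; [lra|].
destruct (MVT_cor2 g g' x y) as [c [E Hc]]; [lra|auto|].
assert (g' c <= 0) by (apply Hp; lra). nra. Qed.

Lemma taylor3 (lo hi : Rbar) (f f1 f2 f3 f4 : R -> R)
  (Hd1 : forall x, inI lo hi x -> derivable_pt_lim f x (f1 x))
  (Hd2 : forall x, inI lo hi x -> derivable_pt_lim f1 x (f2 x))
  (Hd3 : forall x, inI lo hi x -> derivable_pt_lim f2 x (f3 x))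
  (Hd4 : forall x, inI lo hi x -> derivable_pt_lim f3 x (f4 x))
  (Hf4 : forall x, inI lo hi x -> 0 < f4 x) r0 r1 :
  inI lo hi r0 -> inI lo hi r1 ->
  f r1 - f r0 <= (f1 r1 - 1/2 * f2 r1 * (r1 - r0) + 1/6 * f3 r1 * (r1 - r0)^2) * (r1 - r0).
Proof. intros H0 H1.
assert (C3a : forall t, inI lo hi t -> r1 <= t -> f3 r1 <= f3 t).
{ intros t Ht Hle. apply (mono_inc f3 f4); auto.
  - intros c Hc; apply Hd4; apply (conv_I lo hi r1 t); auto.
  - intros c Hc; left; apply Hf4; apply (conv_I lo hi r1 t); auto. }
assert (C3b : forall t, inI lo hi t -> t <= r1 -> f3 t <= f3 r1).
{ intros t Ht Hle. apply (mono_inc f3 f4); auto.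
  - intros c Hc; apply Hd4; apply (conv_I lo hi t r1); auto.
  - intros c Hc; left; apply Hf4; apply (conv_I lo hi t r1); auto. }
pose (g2 := fun t => f2 t - (f2 r1 + f3 r1*(t-r1) + 0*(t-r1)^2 + 0*(t-r1)^3)).
pose (g2' := fun x => f3 x - (f3 r1 + 2*0*(x-r1) + 3*0*(x-r1)^2)).
assert (D2 : forall c, inI lo hi c -> derivable_pt_lim g2 c (g2' c)).
{ intros c Hc. apply (dpoly f2 f3). auto. }
assert (C2 : forall t, inI lo hi t -> 0 <= g2 t).
{ intros t Ht. destruct (Rle_dec r1 t).
  - replace 0 with (g2 r1) by (unfold g2; ring). apply (mono_inc g2 g2'); auto.
    + intros c Hc; apply D2; apply (conv_I lo hi r1 t); auto.
    + intros c Hc; unfold g2'. assert (f3 r1 <= f3 c) by (apply C3a; [apply (conv_I lo hi r1 t)|]; auto; lra). lra.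
  - replace 0 with (g2 r1) by (unfold g2; ring). apply (mono_dec g2 g2'); try lra.
    + intros c Hc; apply D2; apply (conv_I lo hi t r1); auto; lra.
    + intros c Hc; unfold g2'. assert (f3 c <= f3 r1) by (apply C3b; [apply (conv_I lo hi t r1)|]; auto; lra). lra. }
pose (g1 := fun t => f1 t - (f1 r1 + f2 r1*(t-r1) + (f3 r1/2)*(t-r1)^2 + 0*(t-r1)^3)).
pose (g1' := fun x => f2 x - (f2 r1 + 2*(f3 r1/2)*(x-r1) + 3*0*(x-r1)^2)).
assert (D1 : forall c, inI lo hi c -> derivable_pt_lim g1 c (g1' c)).
{ intros c Hc. apply (dpoly f1 f2). auto. }
assert (E12 : forall c, g1' c = g2 c) by (intros; unfold g1', g2; field).
assert (C1a : forall t, inI lo hi t -> r1 <= t -> g1 r1 <= g1 t).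
{ intros t Ht Hle. apply (mono_inc g1 g1'); auto.
  - intros c Hc; apply D1; apply (conv_I lo hi r1 t); auto.
  - intros c Hc; rewrite E12; apply C2; apply (conv_I lo hi r1 t); auto. }
assert (C1b : forall t, inI lo hi t -> t <= r1 -> g1 t <= g1 r1).
{ intros t Ht Hle. apply (mono_inc g1 g1'); auto.
  - intros c Hc; apply D1; apply (conv_I lo hi t r1); auto.
  - intros c Hc; rewrite E12; apply C2; apply (conv_I lo hi t r1); auto. }
assert (G1r : g1 r1 = 0) by (unfold g1; ring).
pose (g0 := fun t => f t - (f r1 + f1 r1*(t-r1) + (f2 r1/2)*(t-r1)^2 + (f3 r1/6)*(t-r1)^3)).
pose (g0' := fun x => f1 x - (f1 r1 + 2*(f2 r1/2)*(x-r1) + 3*(f3 r1/6)*(x-r1)^2)).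
assert (D0 : forall c, inI lo hi c -> derivable_pt_lim g0 c (g0' c)).
{ intros c Hc. apply (dpoly f f1). auto. }
assert (E01 : forall c, g0' c = g1 c) by (intros; unfold g0', g1; field).
assert (C0 : 0 <= g0 r0).
{ replace 0 with (g0 r1) by (unfold g0; ring). destruct (Rle_dec r1 r0).
  - apply (mono_inc g0 g0'); auto.
    + intros c Hc; apply D0; apply (conv_I lo hi r1 r0); auto.
    + intros c Hc; rewrite E01. rewrite <- G1r. apply C1a; try lra. apply (conv_I lo hi r1 r0); auto.
  - apply (mono_dec g0 g0'); try lra.
    + intros c Hc; apply D0; apply (conv_I lo hi r0 r1); auto; lra.
    + intros c Hc; rewrite E01. rewrite <- G1r. apply C1b; try lra. apply (conv_I lo hi r0 r1); auto; lra. }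
unfold g0 in C0. 
assert (E : (f1 r1 - 1/2 * f2 r1 * (r1 - r0) + 1/6 * f3 r1 * (r1 - r0)^2) * (r1 - r0)
  = - (f1 r1*(r0-r1) + (f2 r1/2)*(r0-r1)^2 + (f3 r1/6)*(r0-r1)^3)) by field.
rewrite E. lra.
Qed.
Lemma ext_pos N (G : grid) a b c : (1 <= N)%nat ->
  (forall i j k, in_cells N i j k -> 0 < G i j k) -> 0 < ext N G a b c.
Proof. intros HN H. unfold ext. apply H. unfold in_cells. pose proof (clamp_rng N a HN).
pose proof (clamp_rng N b HN). pose proof (clamp_rng N c HN). auto. Qed.

Lemma Ax_one N a b c : Ax N one a b c = 1.
Proof. unfold Ax, ext, one. field. Qed.
Lemma Ay_one N a b c : Ay N one a b c = 1.
Proof. unfold Ay, ext, one. field. Qed.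
Lemma Az_one N a b c : Az N one a b c = 1.
Proof. unfold Az, ext, one. field. Qed.

Lemma Lap_div N h u i j k : Lap N h u i j k = divDgrad N h one u i j k.
Proof. unfold Lap, divDgrad, dx, dy, dz; cbv beta. rewrite !Ax_one, !Ay_one, !Az_one, !Rmult_1_l. reflexivity. Qed.

Lemma ip_nonneg_sq N h (u : grid) : 0 < h -> 0 <= norm2sq N h u.
Proof. intros. unfold norm2sq, ip. apply Rmult_le_pos. apply pow_le; lra.
apply sum3_nonneg; intros. apply Rle_0_sqr. Qed.

Lemma wgrad_nonneg N h D u : (1 <= N)%nat -> 0 < h ->
  (forall i j k, in_cells N i j k -> 0 < D i j k) -> 0 <= wgrad_ip N h D u u.
Proof. intros HN Hh HD.
assert (HA : forall a b c, 0 < Ax N D a b c).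
{ intros. unfold Ax. pose proof (ext_pos N D (S a) b c HN HD). pose proof (ext_pos N D a b c HN HD). lra. }
assert (HB : forall a b c, 0 < Ay N D a b c).
{ intros. unfold Ay. pose proof (ext_pos N D a (S b) c HN HD). pose proof (ext_pos N D a b c HN HD). lra. }
assert (HC : forall a b c, 0 < Az N D a b c).
{ intros. unfold Az. pose proof (ext_pos N D a b (S c) HN HD). pose proof (ext_pos N D a b c HN HD). lra. }
assert (P : forall A x, 0 < A -> 0 <= A * x * x) by (intros; nra).
assert (h3 : 0 <= h^3) by (apply pow_le; lra).
unfold wgrad_ip, face_ip, ip. repeat apply Rplus_le_le_0_compat; apply Rmult_le_pos; auto;
 apply sum3_nonneg; intros; unfold ax, ay, az, one;
 match goal with |- context [?X + ?Y] =>
   let A := fresh in let B := fresh in assert (A : 0 <= X) by (apply P; auto);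
   assert (B : 0 <= Y) by (apply P; auto); lra end.
Qed.

Ltac lin3 := repeat rewrite <- sum3_scal; repeat (rewrite <- sum3_plus || rewrite <- sum3_minus);
  apply sum3_ext; intros; cbv beta.
Theorem mainTheorem4
  (lo hi : Rbar) (f f1 f2 f3 f4 : R -> R)
  (Hint : Rbar_lt lo hi)
  (Hd1 : forall x, inI lo hi x -> derivable_pt_lim f x (f1 x))
  (Hd2 : forall x, inI lo hi x -> derivable_pt_lim f1 x (f2 x))
  (Hd3 : forall x, inI lo hi x -> derivable_pt_lim f2 x (f3 x))
  (Hd4 : forall x, inI lo hi x -> derivable_pt_lim f3 x (f4 x))
  (Hc4 : forall x, inI lo hi x -> continuity_pt f4 x)
  (Hf2 : forall x, inI lo hi x -> 0 < f2 x)
  (Hf4 : forall x, inI lo hi x -> 0 < f4 x)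
  (a b : R) (N : nat) (Hab : a < b) (HN : (1 <= N)%nat)
  (gamma mu alpha chi theta dt : R)
  (Hgamma : 0 < gamma) (Hmu : 0 < mu) (Halpha : 0 < alpha) (Hchi : 0 < chi)
  (Htheta : 0 < theta) (Hdt : 0 < dt)
  (rho_nm1 rho_n phi_n rho_np1 phi_np1 : grid)
  (Hrn : forall i j k, in_cells N i j k -> inI lo hi (rho_n i j k))
  (Hrnp1 : forall i j k, in_cells N i j k -> inI lo hi (rho_np1 i j k))
  (Hrhat : forall i j k, in_cells N i j k -> inI lo hi (rhohat dt rho_nm1 rho_n i j k))
  (Hscheme_rho : forall i j k, in_cells N i j k ->
     (rho_np1 i j k - rho_n i j k) / dt
     = divDgrad N ((b - a) / INR N)
         (fun p q r => 1 / f2 (rhohat dt rho_nm1 rho_n p q r))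
         (vhalf gamma chi theta dt f1 f2 f3 rho_n rho_np1 phi_n phi_np1) i j k)
  (Hscheme_phi : forall i j k, in_cells N i j k ->
     theta * ((phi_np1 i j k - phi_n i j k) / dt)
     = mu / 2 * (Lap N ((b - a) / INR N) phi_np1 i j k + Lap N ((b - a) / INR N) phi_n i j k)
       - alpha / 2 * (phi_np1 i j k + phi_n i j k)
       + chi / 2 * (rho_np1 i j k + rho_n i j k)) :
  let h := (b - a) / INR N in
  let v := vhalf gamma chi theta dt f1 f2 f3 rho_n rho_np1 phi_n phi_np1 in
  let rhs :=
    - dt * wgrad_ip N h (fun p q r => 1 / f2 (rhohat dt rho_nm1 rho_n p q r)) v v
    - theta / dt * norm2sq N h (fun p q r => phi_np1 p q r - phi_n p q r)
    - chi ^ 2 * dt / (4 * theta) * norm2sq N h (fun p q r => rho_np1 p q r - rho_n p q r) in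
  Fh N h gamma chi mu alpha f rho_np1 phi_np1 - Fh N h gamma chi mu alpha f rho_n phi_n <= rhs
  /\ rhs <= 0.
Proof.
intros h v rhs.
assert (Hh : 0 < h).
{ unfold h. apply Rdiv_lt_0_compat; [lra|]. apply lt_0_INR; lia. }
assert (Hh0 : h <> 0) by lra.
assert (h3 : 0 < h^3) by (apply pow_lt; lra).
assert (HC : forall i j k, (i < N)%nat -> (j < N)%nat -> (k < N)%nat -> in_cells N (S i) (S j) (S k)).
{ intros; unfold in_cells; lia. }
fold h in Hscheme_rho, Hscheme_phi. fold v in Hscheme_rho. clearbody h.
assert (HDpos : forall i j k, in_cells N i j k -> 0 < (fun p q r => 1 / f2 (rhohat dt rho_nm1 rho_n p q r)) i j k).
{ intros; cbv beta. apply Rdiv_lt_0_compat; [lra|]. apply Hf2, Hrhat; auto. }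
assert (W0 := wgrad_nonneg N h _ v HN Hh HDpos).
assert (P0 := ip_nonneg_sq N h (fun p q r => phi_np1 p q r - phi_n p q r) Hh).
assert (Q0 := ip_nonneg_sq N h (fun p q r => rho_np1 p q r - rho_n p q r) Hh).
set (W := wgrad_ip N h (fun p q r => 1 / f2 (rhohat dt rho_nm1 rho_n p q r)) v v) in *.
set (P := norm2sq N h (fun p q r => phi_np1 p q r - phi_n p q r)) in *.
set (Q := norm2sq N h (fun p q r => rho_np1 p q r - rho_n p q r)) in *.
assert (Hrhs : rhs <= 0).
{ unfold rhs. assert (0 <= dt * W) by nra. assert (0 <= theta / dt * P).
  { apply Rmult_le_pos; auto. apply Rlt_le, Rdiv_lt_0_compat; lra. }
  assert (0 <= chi ^ 2 * dt / (4 * theta) * Q).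
  { apply Rmult_le_pos; auto. apply Rlt_le, Rdiv_lt_0_compat; [|lra]. apply Rmult_lt_0_compat; [|lra]. apply pow_lt; lra. }
  lra. }
split; [|exact Hrhs].
assert (FA : gamma * ip N h (fun i j k => f (rho_np1 i j k)) one - gamma * ip N h (fun i j k => f (rho_n i j k)) one
   <= gamma * ip N h (Shalf f1 f2 f3 rho_n rho_np1) (fun p q r => rho_np1 p q r - rho_n p q r)).
{ unfold ip. replace (gamma * (h ^ 3 * sum3 N (fun i j k => f (rho_np1 i j k) * one i j k)) -
   gamma * (h ^ 3 * sum3 N (fun i j k => f (rho_n i j k) * one i j k))) with
   (gamma * (h ^ 3 * (sum3 N (fun i j k => f (rho_np1 i j k) * one i j k) -
   sum3 N (fun i j k => f (rho_n i j k) * one i j k)))) by ring.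
  apply Rmult_le_compat_l; [lra|]. apply Rmult_le_compat_l; [lra|].
  rewrite <- sum3_minus. apply sum3_le. intros i j k Hi Hj Hk. unfold one, Shalf; cbv beta zeta.
  pose proof (taylor3 lo hi f f1 f2 f3 f4 Hd1 Hd2 Hd3 Hd4 Hf4 (rho_n (S i) (S j) (S k)) (rho_np1 (S i) (S j) (S k))
    (Hrn _ _ _ (HC i j k Hi Hj Hk)) (Hrnp1 _ _ _ (HC i j k Hi Hj Hk))). lra. }
assert (FB : ip N h (fun p q r => rho_np1 p q r - rho_n p q r) v = - dt * W).
{ unfold W. rewrite Ropp_mult_distr_l_reverse, Ropp_mult_distr_r. rewrite <- sbp by auto. unfold ip.
  replace (sum3 N (fun i j k => (rho_np1 i j k - rho_n i j k) * v i j k)) with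
    (dt * sum3 N (fun i j k => v i j k * divDgrad N h (fun p q r => 1 / f2 (rhohat dt rho_nm1 rho_n p q r)) v i j k)).
  - ring.
  - rewrite <- sum3_scal. apply sum3_ext. intros i j k Hi Hj Hk.
    rewrite <- (Hscheme_rho _ _ _ (HC i j k Hi Hj Hk)). field. lra. }
assert (FC : ip N h (fun p q r => rho_np1 p q r - rho_n p q r) v =
   gamma * ip N h (Shalf f1 f2 f3 rho_n rho_np1) (fun p q r => rho_np1 p q r - rho_n p q r)
   - chi / 2 * ip N h (fun p q r => rho_np1 p q r - rho_n p q r) (fun p q r => phi_np1 p q r + phi_n p q r)
   + chi ^ 2 * dt / (4 * theta) * Q).
{ unfold Q, norm2sq, ip.
  replace (sum3 N (fun i j k => (rho_np1 i j k - rho_n i j k) * v i j k)) with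
   (gamma * sum3 N (fun i j k => Shalf f1 f2 f3 rho_n rho_np1 i j k * (rho_np1 i j k - rho_n i j k))
   - chi / 2 * sum3 N (fun i j k => (rho_np1 i j k - rho_n i j k) * (phi_np1 i j k + phi_n i j k))
   + chi ^ 2 * dt / (4 * theta) * sum3 N (fun i j k => (rho_np1 i j k - rho_n i j k) * (rho_np1 i j k - rho_n i j k))).
  - ring.
  - symmetry. lin3. unfold v, vhalf. ring. }
assert (FD : theta / dt * P = - (mu / 2) * (gradnorm2 N h phi_np1 - gradnorm2 N h phi_n)
   - alpha / 2 * (norm2sq N h phi_np1 - norm2sq N h phi_n)
   + chi / 2 * ip N h (fun p q r => rho_np1 p q r + rho_n p q r) (fun p q r => phi_np1 p q r - phi_n p q r)).
{ set (ps := fun p q r => phi_np1 p q r + phi_n p q r).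
  set (dP := fun p q r => phi_np1 p q r - phi_n p q r).
  assert (L1 : theta / dt * sum3 N (fun i j k => dP i j k * dP i j k) =
    mu / 2 * sum3 N (fun i j k => Lap N h ps i j k * dP i j k)
    - alpha / 2 * sum3 N (fun i j k => ps i j k * dP i j k)
    + chi / 2 * sum3 N (fun i j k => (rho_np1 i j k + rho_n i j k) * dP i j k)).
  { transitivity (sum3 N (fun i j k => (mu / 2 * (Lap N h phi_np1 i j k + Lap N h phi_n i j k)
       - alpha / 2 * (phi_np1 i j k + phi_n i j k) + chi / 2 * (rho_np1 i j k + rho_n i j k)) * dP i j k)).
    - rewrite <- sum3_scal. apply sum3_ext. intros i j k Hi Hj Hk.
      rewrite <- (Hscheme_phi _ _ _ (HC i j k Hi Hj Hk)). unfold dP. field. lra.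
    - lin3. unfold ps, dP, Lap, dx, dy, dz, Dx, Dy, Dz, ext. unfold Rdiv. ring. }
  assert (L3 : h^3 * sum3 N (fun i j k => Lap N h ps i j k * dP i j k)
     = - wgrad_ip N h one ps dP).
  { rewrite <- sbp by auto. unfold ip. f_equal. apply sum3_ext; intros. rewrite Lap_div. ring. }
  assert (L4 : wgrad_ip N h one ps dP = gradnorm2 N h phi_np1 - gradnorm2 N h phi_n).
  { unfold wgrad_ip, gradnorm2, face_ip, ip.
    rewrite <- !sum3_scal. repeat (rewrite <- sum3_plus || rewrite <- sum3_minus).
    apply sum3_ext; intros. cbv beta. unfold ax, ay, az. rewrite !Ax_one, !Ay_one, !Az_one.
    unfold one, ps, dP, Dx, Dy, Dz, ext. unfold Rdiv. ring. }
  assert (L5 : sum3 N (fun i j k => ps i j k * dP i j k) =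
     sum3 N (fun i j k => phi_np1 i j k * phi_np1 i j k) - sum3 N (fun i j k => phi_n i j k * phi_n i j k)).
  { rewrite <- sum3_minus. apply sum3_ext; intros. unfold ps, dP. ring. }
  unfold P. fold dP. unfold norm2sq at 1. unfold ip at 1.
  unfold norm2sq, ip. unfold ip in L3.
  rewrite <- L4.
  replace (wgrad_ip N h one ps dP) with (- (h ^ 3 * sum3 N (fun i j k : nat => Lap N h ps i j k * dP i j k))) by lra.
  replace (theta / dt * (h ^ 3 * sum3 N (fun i j k => dP i j k * dP i j k))) with
     (h^3 * (theta / dt * sum3 N (fun i j k => dP i j k * dP i j k))) by ring.
  rewrite L1, L5. ring. }
assert (FE : chi / 2 * ip N h (fun p q r => rho_np1 p q r - rho_n p q r) (fun p q r => phi_np1 p q r + phi_n p q r)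
  + chi / 2 * ip N h (fun p q r => rho_np1 p q r + rho_n p q r) (fun p q r => phi_np1 p q r - phi_n p q r)
  = chi * ip N h rho_np1 phi_np1 - chi * ip N h rho_n phi_n).
{ unfold ip.
  assert (sum3 N (fun i j k => (rho_np1 i j k - rho_n i j k) * (phi_np1 i j k + phi_n i j k))
    + sum3 N (fun i j k => (rho_np1 i j k + rho_n i j k) * (phi_np1 i j k - phi_n i j k))
    = 2 * sum3 N (fun i j k => rho_np1 i j k * phi_np1 i j k) - 2 * sum3 N (fun i j k => rho_n i j k * phi_n i j k)).
  { rewrite <- !sum3_scal, <- sum3_plus, <- sum3_minus. apply sum3_ext; intros; cbv beta; ring. }
  cbv beta in *. nra. }
unfold rhs, Fh. fold P Q. cbv beta in *. lra.
Qed.
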